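(* Let $k\ge0$ and $n\ge 2k+2$, and fix reals $t_1<\dots<t_{n+1}$. Let $C_{2k+2}(n+1)=\mathrm{conv}\{\mu_{2k+2}(t_i): i\in[n+1]\}$ and $C_{2k+1}(n+1)=\mathrm{conv}\{\mu_{2k+1}(t_i): i\in[n+1]\}$, and identify faces of both polytopes with subsets of the index set $[n+1]$ of their vertices. If $F\subseteq[n+1]$ indexes a $k$-face of $C_{2k+2}(n+1)$ but $F$ does not index a $k$-face of $C_{2k+1}(n+1)$, then every facet of $C_{2k+2}(n+1)$ containing $F$ is a lower facet.
   Context: $\mu_d(t):=(t,t^2,\dots,t^d)^T\in\mathbb R^d$ is the moment curve. A facet of a full-dimensional polytope in $\mathbb R^d$ is an upper facet if its outer normal vector has positive last coordinate, and a lower facet if its outer normal vector has negative last coordinate (for cyclic polytopes on the moment curve every facet is one of the two). *)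

(* Defs.v *)
From HB Require Import structures.
From mathcomp Require Import all_boot all_order all_algebra.
Set Implicit Arguments. Unset Strict Implicit. Unset Printing Implicit Defensive.
Import Order.TTheory GRing.Theory Num.Theory.
Local Open Scope ring_scope.

Definition mu (R : realFieldType) (d : nat) (t : R) : 'rV[R]_d :=
  \row_(j < d) t ^+ j.+1.

Definition dotv (R : realFieldType) (d : nat) (c x : 'rV[R]_d) : R :=
  \sum_(j < d) c 0 j * x 0 j.

(* The affine functional x |-> <c,x> <= b is valid on all points mu_d(t_i)
   (hence on the polytope conv{mu_d(t_i)}), and the vertices on which it is
   tight are exactly those indexed by F.  (c is an outer normal.) *)
Definition exposes (R : realFieldType) (d m : nat) (t : 'I_m -> R)
    (c : 'rV[R]_d) (b : R) (F : {set 'I_m}) : Prop :=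
  forall i : 'I_m,
    dotv c (mu d (t i)) <= b /\ (i \in F <-> dotv c (mu d (t i)) = b).

Definition is_face (R : realFieldType) (d m : nat) (t : 'I_m -> R)
    (F : {set 'I_m}) : Prop :=
  exists (c : 'rV[R]_d) (b : R), exposes t c b F.

(* Homogenised coordinates (1, mu_d(t_i)) of the points indexed by F
   (rows outside F are zero); its rank is (affine dimension of F) + 1. *)
Definition homog (R : realFieldType) (d m : nat) (t : 'I_m -> R)
    (F : {set 'I_m}) : 'M[R]_(m, d.+1) :=
  \matrix_(i < m, j < d.+1) (if i \in F then t i ^+ j else 0).

Definition is_kface (R : realFieldType) (d m : nat) (t : 'I_m -> R)
    (k : nat) (F : {set 'I_m}) : Prop :=
  is_face d t F /\ \rank (homog d t F) = k.+1.

Definition is_lower_facet (R : realFieldType) (d m : nat) (t : 'I_m -> R)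
    (G : {set 'I_m}) : Prop :=
  is_kface d.+1 t d G /\
  exists (c : 'rV[R]_d.+1) (b : R), exposes t c b G /\ c 0 ord_max < 0.

(* Main.v *)
Require Import Defs.
From HB Require Import structures.
From mathcomp Require Import all_boot all_order all_algebra.
From Stdlib Require Import Lia.
Set Implicit Arguments. Unset Strict Implicit. Unset Printing Implicit Defensive.
Import Order.TTheory GRing.Theory Num.Theory.
Local Open Scope ring_scope.

Section Helpers1.
Variable R : realFieldType.

Lemma rank_homog_ub (d m : nat) (t : 'I_m -> R) (F : {set 'I_m}) :
  (\rank (homog d t F) <= #|F|)%N.
Proof.
pose Q : 'M[R]_(m, #|F|) := \matrix_(i, s) (i == enum_val s)%:R.
pose B : 'M[R]_(#|F|, d.+1) := \matrix_(s, l) (t (enum_val s) ^+ l).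
have -> : homog d t F = Q *m B.
  apply/matrixP => i l; rewrite !mxE.
  case: (boolP (i \in F)) => Hi.
    rewrite (bigD1 (enum_rank_in Hi i)) //= !mxE enum_rankK_in // eqxx mul1r.
    rewrite big1 ?addr0 // => s Hs; rewrite !mxE.
    case: eqP => [Ei|]; last by rewrite mul0r.
    have : enum_val s = enum_val (enum_rank_in Hi i) by rewrite enum_rankK_in.
    by move/enum_val_inj => Es; move: Hs; rewrite Es eqxx.
  rewrite big1 // => s _; rewrite !mxE.
  case: eqP => [Ei|]; last by rewrite mul0r.
  by move: Hi; rewrite Ei enum_valP.
exact: leq_trans (mxrankM_maxl _ _) (rank_leq_col _).
Qed.

Lemma rank_homog_lb (d m : nat) (t : 'I_m -> R) (F : {set 'I_m}) :
  injective t -> (minn #|F| d.+1 <= \rank (homog d t F))%N.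
Proof.
move=> tinj.
set p := minn #|F| d.+1.
have h1 : (p <= #|F|)%N by rewrite geq_minl.
have h2 : (p <= d.+1)%N by rewrite geq_minr.
pose sg : 'I_p -> 'I_m := fun s => enum_val (widen_ord h1 s).
pose tau : 'I_p -> 'I_d.+1 := widen_ord h2.
pose a : 'rV[R]_p := \row_s t (sg s).
have E : colsub tau (rowsub sg (homog d t F)) = (Vandermonde p a)^T.
  apply/matrixP => i j; rewrite !mxE /sg enum_valP.
  done.
have sginj : injective sg.
  by move=> x y /enum_val_inj /(congr1 val) /= /val_inj.
have : \rank (colsub tau (rowsub sg (homog d t F))) = p.
  rewrite E mxrank_tr mxrank_unit // unitmxE det_Vandermonde unitfE.
  apply/prodf_neq0 => i _; apply/prodf_neq0 => j ij.
  rewrite subr_eq0 !mxE; apply/eqP => /tinj /sginj ji.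
  by move: ij; rewrite ji ltnn.
move=> <-.
set X := rowsub sg _.
have -> : colsub tau X = (rowsub tau X^T)^T by apply/matrixP => i j; rewrite !mxE.
rewrite mxrank_tr rowsubE (leq_trans (mxrankM_maxr _ _)) // mxrank_tr /X rowsubE.
exact: mxrankM_maxr.
Qed.

End Helpers1.

Section Helpers.
Variable R : realFieldType.

Definition polyc (D : nat) (c : 'rV[R]_D) (b : R) : {poly R} :=
  - b%:P + \sum_(l < D) c 0 l *: 'X^(l.+1).

Lemma polyc_eval D (c : 'rV[R]_D) b x :
  (polyc c b).[x] = dotv c (mu D x) - b.
Proof.
rewrite /polyc hornerD hornerN hornerC horner_sum addrC /dotv.
congr (_ - _); apply: eq_bigr => l _.
by rewrite hornerZ hornerXn !mxE.
Qed.

Lemma polyc_coef D (c : 'rV[R]_D) b j :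
  (polyc c b)`_j = (if j == 0%N then - b else 0) +
      \sum_(l < D) (if j == l.+1 then c 0 l else 0).
Proof.
rewrite /polyc coefD coefN coefC coef_sum; congr (_ + _).
  by case: (j == 0%N); rewrite ?oppr0.
by apply: eq_bigr => l _; rewrite coefZ coefXn; case: eqP; rewrite ?mulr1 ?mulr0.
Qed.

Lemma polyc_size D (c : 'rV[R]_D) b : (size (polyc c b) <= D.+1)%N.
Proof.
apply/leq_sizeP => j hj; rewrite polyc_coef.
have -> : (j == 0%N) = false by case: j hj.
rewrite add0r big1 // => l _.
case: eqP => // E; move: hj; rewrite E ltnS leqNgt.
by rewrite ltn_ord.
Qed.

Lemma polyc_lead D (c : 'rV[R]_D.+1) b : (polyc c b)`_D.+1 = c 0 ord_max.
Proof.
rewrite polyc_coef /= add0r big_ord_recr /= eqxx big1 ?add0r // => l _.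
by rewrite eqSS; case: eqP => // E; have := ltn_ord l; rewrite -{1}E ltnn.
Qed.

Lemma poly_exposer D (q : {poly R}) : (size q <= D.+1)%N ->
  forall x, dotv (\row_(j < D) q`_(j.+1)) (mu D x) - (- q`_0) = q.[x].
Proof.
move=> hq x; rewrite (horner_coef_wide x hq) big_ord_recl /= expr0 mulr1.
rewrite opprK addrC; congr (_ + _); apply: eq_bigr => j _.
by rewrite !mxE.
Qed.

End Helpers.

Lemma core (R : realFieldType) k n (t : 'I_n.+1 -> R) :
  (k.*2.+2 <= n)%N -> injective t ->
  forall F G : {set 'I_n.+1},
  is_kface k.*2.+2 t k F -> ~ is_kface k.*2.+1 t k F ->
  is_kface k.*2.+2 t k.*2.+1 G -> F \subset G -> is_lower_facet k.*2.+1 t G.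
Proof.
move=> hn tinj F G [[c [b hexF]] rkF] hnF hGk FG.
case: (hGk) => [[cg [bg hexG]] rkG].
have cardF : #|F| = k.+1.
  apply/eqP; rewrite eqn_leq; apply/andP; split; last first.
    by rewrite -rkF rank_homog_ub.
  have := rank_homog_lb k.*2.+2 F tinj; rewrite rkF.
  case: (leqP #|F| k.+1) => // hF.
  rewrite geq_min leqNgt hF /= => h; have := leq_trans h (ltnW hF).
  by move: h; rewrite -addnn => /ssrnat.ltP; rewrite -plusE; lia.
have cardG : (k.*2.+2 <= #|G|)%N by rewrite -rkG rank_homog_ub.
pose p := polyc cg bg.
have hp : forall i, p.[t i] <= 0 /\ (i \in G <-> p.[t i] = 0).
  move=> i; rewrite polyc_eval subr_le0; have [h1 h2] := hexG i; split => //.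
  split => [/h2 ->|/eqP]; [by rewrite subrr | rewrite subr_eq0 => /eqP /h2 //].
have psz : (size p <= k.*2.+3)%N by apply: polyc_size.
have plead : p`_(k.*2.+2) = cg 0 ord_max by apply: polyc_lead.
set a := cg 0 ord_max in plead.
case: (ltrgtP a 0) => ha.
- by split => //; exists cg, bg.
- exfalso; apply: hnF.
  pose r := \prod_(x <- map t (enum F)) ('X - x%:P).
  have rmon : r \is monic by apply: monic_prod_XsubC.
  have rsz : size r = k.+2 by rewrite size_prod_XsubC size_map -cardE cardF.
  have rrsz : size (r * r) = k.*2.+3.
    rewrite size_monicM ?monic_neq0 // rsz addSn addnS /= -addnn addnS.
    by [].
  have rrlead : (r * r)`_(k.*2.+2) = 1.
    have := lead_coef_monicM r rmon; rewrite /lead_coef rrsz /=.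
    by move=> ->; move/monicP: rmon.
  pose q := p - a *: (r * r).
  have qsz : (size q <= k.*2.+2)%N.
    apply/leq_sizeP => j hj; rewrite coefB coefZ.
    case: (eqVneq j k.*2.+2) => [->|hj2]; first by rewrite plead rrlead mulr1 subrr.
    have hj3 : (k.*2.+3 <= j)%N by rewrite ltn_neqAle eq_sym hj2.
    move/leq_sizeP: psz => -> //.
    have : (size (r * r)%R <= k.*2.+3)%N by rewrite rrsz.
    by move/leq_sizeP => -> //; rewrite mulr0 subrr.
  have rroot : forall i, (r.[t i] == 0) = (i \in F).
    move=> i; have := root_prod_XsubC (map t (enum F)) (t i).
    by rewrite /root -/r mem_map // mem_enum.
  have qev : forall i, q.[t i] = p.[t i] - a * (r.[t i] * r.[t i]).
    by move=> i; rewrite /q hornerD hornerN hornerZ hornerM.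
  split.
    exists (\row_(j < k.*2.+1) q`_(j.+1)), (- q`_0) => i.
    have E := poly_exposer qsz (t i).
    have [hp1 hp2] := hp i.
    have yge : 0 <= a * (r.[t i] * r.[t i]) by apply: mulr_ge0; [exact: ltW | rewrite -expr2 sqr_ge0].
    split.
      rewrite -subr_le0 E qev subr_le0; exact: le_trans hp1 yge.
    split.
      move=> iF; apply/eqP; rewrite -subr_eq0 E qev.
      move: (iF); rewrite -rroot => /eqP ->; rewrite mulr0 mulr0 subr_eq0.
      by apply/eqP; apply/hp2; move/subsetP: FG; apply.
    move/eqP; rewrite -subr_eq0 E qev subr_eq0 => /eqP hpe.
    have : a * (r.[t i] * r.[t i]) == 0.
      by rewrite eq_le yge andbT -hpe.
    by rewrite mulf_eq0 (gt_eqF ha) /= mulf_eq0 orbb rroot.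
  apply/eqP; rewrite eqn_leq; apply/andP; split.
    by rewrite -cardF rank_homog_ub.
  have := rank_homog_lb k.*2.+1 F tinj; rewrite cardF.
  suff -> : minn k.+1 k.*2.+2 = k.+1 by [].
  by apply/minn_idPl; rewrite -addnn; apply/ssrnat.leP; rewrite -plusE; lia.
- exfalso.
  have psz2 : (size p <= k.*2.+2)%N.
    apply/leq_sizeP => j hj.
    case: (eqVneq j k.*2.+2) => [->|hj2]; first by rewrite plead ha.
    have hj3 : (k.*2.+3 <= j)%N by rewrite ltn_neqAle eq_sym hj2.
    by move/leq_sizeP: psz => ->.
  have p0 : p = 0.
    apply/eqP; apply: contraT => pn0.
    have := max_poly_roots pn0 (rs := map t (enum G)).
    rewrite map_inj_uniq // enum_uniq size_map -cardE.
    have -> : all (root p) (map t (enum G)).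
      apply/allP => x /mapP [g]; rewrite mem_enum => gG ->.
      by apply/eqP; apply/(hp g).2.
    move=> /(_ isT isT) h; have := leq_trans h psz2.
    by rewrite ltnNge cardG.
  have GT : G = setT.
    apply/setP => i; rewrite inE; apply/(hp i).2.
    by rewrite p0 horner0.
  have := rank_homog_lb k.*2.+2 G tinj.
  rewrite rkG GT cardsT card_ord.
  suff -> : minn n.+1 k.*2.+3 = k.*2.+3 by rewrite ltnn.
  by apply/minn_idPr.
Qed.

Theorem lemma2p4 (R : realFieldType) (k n : nat) (t : 'I_n.+1 -> R) :
  (2 * k + 2 <= n)%N ->
  (forall i j : 'I_n.+1, (i < j)%N -> t i < t j) ->
  forall F : {set 'I_n.+1},
    is_kface (2 * k + 2) t k F ->
    ~ is_kface (2 * k + 1) t k F ->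
    forall G : {set 'I_n.+1},
      is_kface (2 * k + 2) t (2 * k + 1) G ->
      F \subset G ->
      is_lower_facet (2 * k + 1) t G.
Proof.
move=> hn hmon F hF hnF G hG FG.
have e2 : (2 * k + 2 = k.*2.+2)%N by rewrite mul2n addn2.
have e1 : (2 * k + 1 = k.*2.+1)%N by rewrite mul2n addn1.
rewrite e2 in hn hF hG; rewrite e1 in hnF hG *.
have tinj : injective t.
  move=> i j tij; apply/eqP; case: (ltngtP i j) => // h.
    by have := hmon _ _ h; rewrite tij ltxx.
  by have := hmon _ _ h; rewrite tij ltxx.
  by apply/eqP/val_inj.
exact: (core hn tinj (F := F) (G := G) hF hnF hG FG).
Qed.
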